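(* Let $p \in \mathbf{C}[x_1,\dots,x_n]$ be of the form $$p = x_1^{M_1}\cdots x_n^{M_n} + \sum_j c(j)\, x_1^{i_1(j)}\cdots x_n^{i_n(j)},$$ where the $c(j)\in\mathbf{C}$ are coefficients, all $M_i>0$, all monomials in the sum are different from $x_1^{M_1}\cdots x_n^{M_n}$, and $i_k(j)\le M_k$ for all $k,j$. If $q\in\mathbf{C}[x_1,\dots,x_n]$ and $\varphi(p)=q$ for some automorphism $\varphi$ of $\mathbf{C}[x_1,\dots,x_N]$ with $N\ge n$, then $\alpha(p)=q$ for some automorphism $\alpha$ of $\mathbf{C}[x_1,\dots,x_n]$.
   Context: Automorphisms are $\mathbf{C}$-algebra automorphisms; $\mathbf{C}[x_1,\dots,x_n]$ is regarded as a subalgebra of $\mathbf{C}[x_1,\dots,x_N]$. *)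

(* Defs.v *)
From HB Require Import structures.
From mathcomp Require Import all_boot all_order all_algebra.
From mathcomp Require Import reals.
From mathcomp.real_closed Require Import complex.
From mathcomp Require Import mpoly.
Set Implicit Arguments. Unset Strict Implicit. Unset Printing Implicit Defensive.
Import Order.TTheory GRing.Theory Num.Theory.
Local Open Scope ring_scope.

Definition is_alg_aut (K : fieldType) (k : nat)
    (f : {mpoly K[k]} -> {mpoly K[k]}) : Prop :=
  [/\ (forall (a : K) (p : {mpoly K[k]}), f (a *: p) = a *: f p),
      (forall p q : {mpoly K[k]}, f (p + q) = f p + f q),
      (forall p q : {mpoly K[k]}, f (p * q) = f p * f q),
      f 1 = 1 &
      bijective f].

Definition mpoly_incl (K : fieldType) (n N : nat) (h : (n <= N)%N)
    (p : {mpoly K[n]}) : {mpoly K[N]} :=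
  p \mPo [tuple 'X_(widen_ord h i) | i < n].

(* Main.v *)
Require Import Defs.
From HB Require Import structures.
From mathcomp Require Import all_boot all_order all_algebra.
From mathcomp Require Import reals.
From mathcomp.real_closed Require Import complex.
From mathcomp Require Import mpoly.
From mathcomp Require Import ring zify.
Set Implicit Arguments. Unset Strict Implicit. Unset Printing Implicit Defensive.
Import Order.TTheory GRing.Theory Num.Theory.
Local Open Scope ring_scope.

Lemma mmap_comp (k : nat) (R S T : nzRingType) (f : R -> S) (h : 'I_k -> S)
  (s : {rmorphism S -> T}) (g : {mpoly R[k]}) :
  s (mmap f h g) = mmap (s \o f) (s \o h) g.
Proof.
rewrite /mmap rmorph_sum; apply: eq_bigr => m _; rewrite rmorphM /mmap1 rmorph_prod.
by congr (_ * _); apply: eq_bigr => i _; rewrite rmorphXn.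
Qed.

Lemma mmap_eq (k : nat) (R S : nzRingType) (f1 f2 : R -> S) (h1 h2 : 'I_k -> S)
  (g : {mpoly R[k]}) : f1 =1 f2 -> h1 =1 h2 -> mmap f1 h1 g = mmap f2 h2 g.
Proof.
move=> ef eh; rewrite /mmap; apply: eq_bigr => m _; rewrite ef /mmap1.
by congr (_ * _); apply: eq_bigr => i _; rewrite eh.
Qed.

Lemma comp_mpolyA (K : comNzRingType) (k l m : nat) (g : {mpoly K[k]})
  (t1 : k.-tuple {mpoly K[l]}) (t2 : l.-tuple {mpoly K[m]}) :
  (g \mPo t1) \mPo t2 = g \mPo [tuple (tnth t1 i \mPo t2) | i < k].
Proof.
rewrite {1}/comp_mpoly mmap_comp /comp_mpoly; apply: mmap_eq => x /=.
  exact: (comp_mpolyC x t2).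
by rewrite tnth_map tnth_ord_tuple.
Qed.

Lemma aut_comp (K : fieldType) (N : nat) (phi : {mpoly K[N]} -> {mpoly K[N]})
  (sc : forall (a : K) p, phi (a *: p) = a *: phi p)
  (ad : forall p q, phi (p + q) = phi p + phi q)
  (mu : forall p q, phi (p * q) = phi p * phi q)
  (one : phi 1 = 1) (g : {mpoly K[N]}) :
  phi g = g \mPo [tuple phi 'X_j | j < N].
Proof.
have phi0 : phi 0 = 0.
  by have := ad 0 0; rewrite addr0 => /(congr1 (fun x => x - phi 0)); rewrite subrr addrK.
have psum := big_morph phi ad phi0.
have pprod := big_morph phi mu one.
have pX x k : phi (x ^+ k) = phi x ^+ k.
  by elim: k => [|k ih]; rewrite ?expr0 // !exprS mu ih.
rewrite {1}(mpolyE g) psum [in X in _ = X](mpolyE g) raddf_sum /=; apply: eq_bigr => m _.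
rewrite sc comp_mpolyZ comp_mpolyX mpolyXE_id pprod; congr (_ *: _).
by apply: eq_bigr => i _; rewrite pX tnth_map tnth_ord_tuple.
Qed.


Lemma mderivXU (K : nzRingType) (k : nat) (i l : 'I_k) :
  mderiv l ('X_i : {mpoly K[k]}) = (i == l)%:R.
Proof.
rewrite mderivX mnm1E; case: eqP => [<-|_]; last by rewrite scale0r.
have -> : (U_(i) - U_(i))%MM = 0%MM by apply/mnmP => x; rewrite mnmBE subnn mnm0E.
by rewrite mpolyX0 scale1r.
Qed.

Lemma mderiv_comp (K : comNzRingType) (k N : nat) (t : k.-tuple {mpoly K[N]})
  (j : 'I_N) (g : {mpoly K[k]}) :
  mderiv j (g \mPo t) = \sum_(i < k) (mderiv i g \mPo t) * mderiv j (tnth t i).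
Proof.
pose P (g : {mpoly K[k]}) :=
  mderiv j (g \mPo t) = \sum_(i < k) (mderiv i g \mPo t) * mderiv j (tnth t i).
have PM a b : P a -> P b -> P (a * b).
  rewrite /P => Pa Pb; rewrite rmorphM /= mderivM Pa Pb mulr_suml mulr_sumr -big_split.
  apply: eq_bigr => i _ /=; rewrite mderivM rmorphD !rmorphM /=; ring.
have P1 : P 1.
  rewrite /P rmorph1 -mpolyC1 mderivC big1 // => i _.
  by rewrite mderivC comp_mpoly0 mul0r.
have PX i : P 'X_i.
  rewrite /P comp_mpolyXU -tnth_nth (bigD1 i) //= big1 ?addr0.
    by rewrite mderivXU eqxx comp_mpoly1 mul1r.
  by move=> l; rewrite eq_sym => /negbTE nil; rewrite mderivXU nil comp_mpoly0 mul0r.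
have PXm m : P 'X_[m].
  rewrite mpolyXE_id; apply: (big_ind P) => // i _.
  by elim: (m i) => [|e ih]; rewrite ?expr0 // exprS; apply: PM.
have PZ c a : P a -> P (c *: a).
  rewrite /P => Pa; rewrite comp_mpolyZ mderivZ Pa scaler_sumr; apply: eq_bigr => i _.
  by rewrite mderivZ comp_mpolyZ scalerAl.
have PD a b : P a -> P b -> P (a + b).
  rewrite /P => Pa Pb; rewrite comp_mpolyD mderivD Pa Pb -big_split; apply: eq_bigr => i _.
  by rewrite mderivD comp_mpolyD mulrDl.
elim/mpolyind: g => [|c m p _ _ Pp]; last by apply: PD => //; apply: PZ.
rewrite /P comp_mpoly0 mderiv0 big1 // => i _.
by rewrite mderiv0 comp_mpoly0 mul0r.
Qed.

Lemma mmap_compf (k : nat) (R S T : nzRingType) (f : R -> S) (h : 'I_k -> S)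
  (s : S -> T) (s0 : s 0 = 0) (sD : forall a b, s (a + b) = s a + s b)
  (sM : forall a b, s (a * b) = s a * s b) (s1 : s 1 = 1) (g : {mpoly R[k]}) :
  s (mmap f h g) = mmap (s \o f) (s \o h) g.
Proof.
have psum := big_morph s sD s0.
have pprod := big_morph s sM s1.
have pX x e : s (x ^+ e) = s x ^+ e.
  by elim: e => [|e ih]; rewrite ?expr0 // !exprS sM ih.
rewrite /mmap psum; apply: eq_bigr => m _; rewrite sM /mmap1 pprod.
by congr (_ * _); apply: eq_bigr => i _; rewrite pX.
Qed.

Lemma sum_eq_le (k : nat) (a b : 'I_k -> nat) :
  (forall i, a i <= b i)%N -> (\sum_i a i = \sum_i b i)%N -> forall i, a i = b i.
Proof.
move=> hab he i; apply/eqP; rewrite eqn_leq hab /=; rewrite leqNgt; apply/negP => lt.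
move: he; rewrite (bigD1 i) //= [X in _ = X -> _](bigD1 i) //=.
have : (\sum_(j < k | j != i) a j <= \sum_(j < k | j != i) b j)%N by apply: leq_sum.
move=> H1 H2; by have := leq_add lt H1; rewrite addSn H2 ltnn.
Qed.

Lemma prod_size (R : idomainType) (k : nat) (f : 'I_k -> {poly R})
  (hf : forall i, f i != 0) (m : 'I_k -> nat) :
  \prod_i f i ^+ m i != 0 /\
  (size (\prod_i f i ^+ m i)).-1 = (\sum_i m i * (size (f i)).-1)%N.
Proof.
elim/big_rec2: _ => [|i y x _ [x0 <-]]; first by rewrite oner_eq0 size_poly1.
split; first by rewrite mulf_neq0 // expf_neq0.
have e0 : f i ^+ m i != 0 by rewrite expf_neq0.
rewrite size_mul //; have h1 := size_exp (f i) (m i).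
have : (0 < size (f i ^+ m i))%N by rewrite size_poly_gt0.
have : (0 < size x)%N by rewrite size_poly_gt0.
lia.
Qed.

Section Main.
Variable K : numFieldType.
Variables n N : nat.
Hypothesis hnN : (n <= N)%N.

Definition tZ : N.-tuple {mpoly K[N]} := [tuple (if (j < n)%N then 'X_j else 0) | j < N].
Definition tR : N.-tuple {mpoly K[n]} :=
  [tuple oapp (fun i : 'I_n => 'X_i) 0 (insub (val j) : option 'I_n) | j < N].
Definition tI : n.-tuple {mpoly K[N]} := [tuple 'X_(widen_ord hnN i) | i < n].
Definition res (g : {mpoly K[N]}) := g \mPo tR.
Definition inA (g : {mpoly K[N]}) := g \mPo tZ = g.

Lemma inclE g : mpoly_incl hnN g = g \mPo tI.
Proof. by []. Qed.

Lemma res_incl g : res (mpoly_incl hnN g) = g.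
Proof.
rewrite inclE /res comp_mpolyA -[RHS]comp_mpoly_id; congr (_ \mPo _).
apply: eq_from_tnth => i; rewrite !tnth_map !tnth_ord_tuple comp_mpolyXU -tnth_nth.
by rewrite tnth_map tnth_ord_tuple /= (valK i).
Qed.

Lemma incl_res g : mpoly_incl hnN (res g) = g \mPo tZ.
Proof.
rewrite inclE /res comp_mpolyA; congr (_ \mPo _).
apply: eq_from_tnth => j; rewrite !tnth_map !tnth_ord_tuple.
case: insubP => [i ji vi|/negbTE ->] /=; last by rewrite comp_mpoly0.
rewrite ji comp_mpolyXU -tnth_nth tnth_map tnth_ord_tuple; congr 'X_(_).
by apply: val_inj.
Qed.

Lemma inA_incl g : inA (mpoly_incl hnN g).
Proof. by rewrite /inA -incl_res res_incl. Qed.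

Lemma inA_incl_res g : inA g -> mpoly_incl hnN (res g) = g.
Proof. by rewrite incl_res. Qed.

Lemma inA_comp (t : n.-tuple {mpoly K[N]}) g :
  (forall i, inA (tnth t i)) -> inA (g \mPo t).
Proof.
move=> ht; rewrite /inA comp_mpolyA; congr (_ \mPo _).
by apply: eq_from_tnth => i; rewrite tnth_map tnth_ord_tuple ht.
Qed.

Lemma inA_deriv g (j : 'I_N) : inA g -> (n <= j)%N -> mderiv j g = 0.
Proof.
rewrite /inA => <- hj; rewrite mderiv_comp big1 // => k _.
rewrite tnth_map tnth_ord_tuple; case: ifP => hk; last by rewrite mderiv0 mulr0.
rewrite mderivXU; case: eqP => [ekj|]; last by rewrite mulr0.
by move: hk; rewrite ekj ltnNge hj.
Qed.

Lemma deriv_inA g : (forall j : 'I_N, (n <= j)%N -> mderiv j g = 0) -> inA g.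
Proof.
move=> hd.
have hs : forall m, m \in msupp g -> forall j : 'I_N, (n <= j)%N -> m j = 0%N.
  move=> m; rewrite mcoeff_msupp => gm j hj; apply/eqP; apply: contraR gm => mj.
  have := congr1 (mcoeff (m - U_(j))%MM) (hd j hj).
  rewrite mcoeff_mderiv mcoeff0 submK; last first.
    by apply/mnm_lepP => l; rewrite mnm1E; case: eqP => [<-|]; rewrite ?lt0n.
  by move/eqP; rewrite mulrn_eq0; case/orP.
rewrite /inA [in X in _ = X](mpolyE g) [in LHS](mpolyE g) raddf_sum /=.
apply: eq_big_seq => m hm; rewrite comp_mpolyZ comp_mpolyX mpolyXE_id; congr (_ *: _).
apply: eq_bigr => j _; rewrite tnth_map tnth_ord_tuple; case: ifP => // /negbT.
by rewrite -leqNgt => /(hs m hm) ->; rewrite !expr0.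
Qed.


Definition hT (j : 'I_N) : {poly {mpoly K[N]}} :=
  if (j < n)%N then ('X_j)%:P else ('X_j)%:P * 'X.
Definition psi (g : {mpoly K[N]}) : {poly {mpoly K[N]}} :=
  mmap (polyC \o mpolyC N (R:=K)) hT g.

Lemma psiM a b : psi (a * b) = psi a * psi b.
Proof. exact: rmorphM. Qed.

Lemma psiD a b : psi (a + b) = psi a + psi b.
Proof. exact: rmorphD. Qed.
Lemma psi_0 : psi 0 = 0.
Proof. exact: rmorph0. Qed.
Lemma psi_1 : psi 1 = 1.
Proof. exact: rmorph1. Qed.

Lemma psiC c : psi c%:MP = (c%:MP)%:P.
Proof. by rewrite /psi mmapC. Qed.

Lemma psiX j : psi 'X_j = hT j.
Proof. by rewrite /psi mmapX mmap1U. Qed.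

Lemma psi_horner g c : (psi g).[c] =
  mmap (mpolyC N (R:=K)) (fun j => if (j < n)%N then 'X_j else 'X_j * c) g.
Proof.
rewrite /psi /mmap horner_sum; apply: eq_bigr => m _.
rewrite hornerM /= hornerC /mmap1 horner_prod; congr (_ * _).
apply: eq_bigr => i _; rewrite horner_exp /hT; congr (_ ^+ _).
by case: ifP; rewrite ?hornerC // hornerMX hornerC.
Qed.

Lemma psi1 g : (psi g).[1] = g.
Proof.
rewrite psi_horner -[RHS]comp_mpoly_id; apply: mmap_eq => // x.
by rewrite tnth_map tnth_ord_tuple mulr1; case: ifP.
Qed.

Lemma psi0 g : (psi g).[0] = g \mPo tZ.
Proof.
rewrite psi_horner; apply: mmap_eq => // x.
by rewrite tnth_map tnth_ord_tuple mulr0.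
Qed.

Lemma psi_const g : (size (psi g) <= 1)%N -> inA g.
Proof.
move/size1_polyC => e; rewrite /inA -psi0 -[RHS]psi1 e.
by rewrite !hornerC.
Qed.

Lemma psi_inA g : inA g -> (size (psi g) <= 1)%N.
Proof.
rewrite /inA => <-; rewrite {1}/comp_mpoly (@mmap_compf _ _ _ _ _ _ psi psi_0 psiD psiM psi_1).
have -> : mmap (psi \o mpolyC N (R:=K)) (psi \o tnth tZ) g = (g \mPo tZ)%:P.
  rewrite /comp_mpoly (@mmap_compf _ _ _ _ _ _ polyC (rmorph0 _) (rmorphD _) (rmorphM _) (rmorph1 _)).
  apply: mmap_eq => x /=; first by rewrite psiC.
  rewrite tnth_map tnth_ord_tuple; case: ifP => hx; last by rewrite psi_0 polyC0.
  by rewrite psiX /hT hx.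
exact: size_polyC_leq1.
Qed.

Lemma psi_eq0 g : (psi g == 0) = (g == 0).
Proof.
apply/eqP/eqP => [e|->]; last exact: rmorph0.
by rewrite -(psi1 g) e horner0.
Qed.


Lemma phi_incl (phi : {mpoly K[N]} -> {mpoly K[N]}) (Hphi : is_alg_aut phi) (g : {mpoly K[n]}) :
  phi (mpoly_incl hnN g) = g \mPo [tuple phi 'X_(widen_ord hnN i) | i < n].
Proof.
case: Hphi => sc ad mu one _; rewrite (aut_comp sc ad mu one) inclE comp_mpolyA.
congr (_ \mPo _); apply: eq_from_tnth => i.
by rewrite !tnth_map !tnth_ord_tuple comp_mpolyXU -tnth_nth tnth_map tnth_ord_tuple.
Qed.

Lemma aut0 (phi : {mpoly K[N]} -> {mpoly K[N]}) (Hphi : is_alg_aut phi) : phi 0 = 0.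
Proof.
case: Hphi => _ ad _ _ _.
by have := ad 0 0; rewrite addr0 => /(congr1 (fun x => x - phi 0)); rewrite subrr addrK.
Qed.

Lemma aut_neq0 (phi : {mpoly K[N]} -> {mpoly K[N]}) (Hphi : is_alg_aut phi) g :
  g != 0 -> phi g != 0.
Proof.
move=> g0; apply: contra g0 => /eqP e; apply/eqP; have [_ _ _ _ /bij_inj inj] := Hphi.
by apply: inj; rewrite e (aut0 Hphi).
Qed.

Lemma incl_neq0 (g : {mpoly K[n]}) : g != 0 -> mpoly_incl hnN g != 0.
Proof.
move=> g0; apply: contra g0 => /eqP e; apply/eqP.
by rewrite -(res_incl g) e /res comp_mpoly0.
Qed.

Lemma X_neq0 (k : nat) (j : 'I_k) : ('X_j : {mpoly K[k]}) != 0.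
Proof.
apply/eqP => /(congr1 (mcoeff U_(j))); rewrite mcoeffX eqxx mcoeff0.
by move/eqP; rewrite oner_eq0.
Qed.

Lemma step2 (phi : {mpoly K[N]} -> {mpoly K[N]}) (Hphi : is_alg_aut phi)
  (M : 'X_{1..n}) (p q : {mpoly K[n]}) :
  (forall k : 'I_n, (0 < M k)%N) ->
  p@_M = 1 ->
  (forall m : 'X_{1..n}, m \in msupp p -> forall k : 'I_n, (m k <= M k)%N) ->
  phi (mpoly_incl hnN p) = mpoly_incl hnN q ->
  forall i0 : 'I_n, inA (phi 'X_(widen_ord hnN i0)).
Proof.
move=> hM hpM hsupp hpq i0.
pose F (i : 'I_n) := phi 'X_(widen_ord hnN i).
pose lF := [tuple F i | i < n].
have phiI g : phi (mpoly_incl hnN g) = g \mPo lF by rewrite phi_incl.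
pose f i := psi (F i).
have Fn0 i : F i != 0 by apply: aut_neq0 => //; apply: X_neq0.
have fn0 i : f i != 0 by rewrite psi_eq0.
pose d i := (size (f i)).-1.
pose L i := lead_coef (f i).
pose w (m : 'X_{1..n}) := (\sum_(i < n) m i * d i)%N.
pose D := w M.
pose T (m : 'X_{1..n}) := \prod_(i < n) f i ^+ m i.
have hTm m : T m != 0 /\ (size (T m)).-1 = w m.
  exact: (prod_size fn0 (fun i => m i)).
have hTl m : lead_coef (T m) = \prod_(i < n) L i ^+ m i.
  by rewrite lead_coef_prod; apply: eq_bigr => i _; rewrite lead_coef_exp.
have Epsi : psi (p \mPo lF) = \sum_(m <- msupp p) ((p@_m)%:MP)%:P * T m.
  rewrite {1}/comp_mpoly (@mmap_compf _ _ _ _ _ _ psi psi_0 psiD psiM psi_1).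
  rewrite {1}/mmap; apply: eq_bigr => m _.
  have e1 : (psi \o mpolyC N (R:=K)) p@_m = ((p@_m)%:MP)%:P := psiC _.
  have e2 : mmap1 (psi \o tnth lF) m = T m.
    rewrite /mmap1 /T; apply: eq_bigr => i _.
    by rewrite /comp tnth_map tnth_ord_tuple.
  by rewrite e1 e2.
have Hsz : (size (psi (p \mPo lF)) <= 1)%N.
  by rewrite -(phiI p) hpq; apply: psi_inA; apply: inA_incl.
have wle m : m \in msupp p -> (w m <= D)%N.
  by move=> hm; apply: leq_sum => i _; apply: leq_mul => //; apply: hsupp.
pose C := \sum_(m <- msupp p | w m == D) (p@_m)%:MP * \prod_(i < n) L i ^+ m i.
have coefD : (psi (p \mPo lF))`_D = C.
  rewrite Epsi coef_sum /C [RHS]big_mkcond; apply: eq_big_seq => m hm.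
  rewrite coefCM; case: eqP => [wD|wD].
    by rewrite -hTl lead_coefE (proj2 (hTm m)) wD.
  rewrite nth_default ?mulr0 //.
  have := proj1 (hTm m); rewrite -size_poly_gt0 => s0.
  have := proj2 (hTm m); have := wle m hm; move: wD => h1 h2 h3.
  by rewrite -(prednK s0) h3 ltn_neqAle h2 andbT; apply/eqP.
have Mp : M \in msupp p by rewrite mcoeff_msupp hpM oner_eq0.
pose g := \sum_(m <- msupp p | w m == D) p@_m *: 'X_[m].
have g0 : g != 0.
  apply/eqP => /(congr1 (mcoeff M)); rewrite mcoeff0 /g (big_morph _ (@mcoeffD _ _ M) (@mcoeff0 _ _ M)) big_mkcond.
  rewrite (bigD1_seq M) ?msupp_uniq // big1 ?addr0.
    have -> : (w M == D) = true by apply/eqP.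
    by rewrite mcoeffZ mcoeffX eqxx mulr1 hpM /= addr0 => /eqP; rewrite oner_eq0.
  move=> m mM; case: ifP => // _.
  by rewrite mcoeffZ mcoeffX (negbTE mM) mulr0.
pose Y := \sum_(m <- msupp p | w m == D) (p@_m)%:MP * \prod_(i < n) F i ^+ m i.
have EY : phi (mpoly_incl hnN g) = Y.
  rewrite phiI /g (big_morph _ (comp_mpolyD lF) (comp_mpoly0 lF)) /Y; apply: eq_bigr => m _.
  rewrite comp_mpolyZ comp_mpolyX mul_mpolyC; congr (_ *: _).
  by apply: eq_bigr => i _; rewrite tnth_map tnth_ord_tuple.
have Y0 : Y != 0 by rewrite -EY; apply: aut_neq0 => //; apply: incl_neq0.
have LF i : d i = 0%N -> L i = F i.
  move=> di; have : (size (f i) <= 1)%N by move: di; rewrite /d; lia.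
  move/size1_polyC => e; by rewrite /L e lead_coefC -(psi1 (F i)) -/(f i) e hornerC; rewrite coefC eqxx.
have key : C * \prod_(i < n) F i ^+ M i = Y * \prod_(i < n) L i ^+ M i.
  rewrite /C /Y !mulr_suml big_seq_cond [RHS]big_seq_cond; apply: eq_bigr => m /andP [hm /eqP wm].
  suff E : \prod_(i < n) L i ^+ m i * \prod_(i < n) F i ^+ M i =
           \prod_(i < n) F i ^+ m i * \prod_(i < n) L i ^+ M i by rewrite -!mulrA E.
  rewrite -!big_split; apply: eq_bigr => k _.
  have [dk|dk] := eqVneq (d k) 0%N; first by rewrite (LF k dk).
  have : (m k * d k = M k * d k)%N.
    apply: (@sum_eq_le n (fun j => m j * d j)%N (fun j => M j * d j)%N) => //.
    by move=> j; apply: leq_mul => //; apply: hsupp.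
  by move/eqP; rewrite eqn_pmul2r ?lt0n // => /eqP ->; rewrite /= mulrC.
have C0 : C != 0.
  apply: contraNneq Y0 => C0; move: key; rewrite C0 mul0r => /esym /eqP.
  rewrite mulf_eq0 => /orP [/eqP //|]; rewrite prodf_seq_eq0 => /hasP [i _] /=.
  by rewrite expf_eq0 lead_coef_eq0 (negbTE (fn0 i)) andbF.
have D0 : D = 0%N.
  apply/eqP; rewrite -leqn0; apply: contraNT C0; rewrite -ltnNge => D0.
  by rewrite -coefD nth_default //; apply: leq_trans Hsz _.
have : (M i0 * d i0 == 0)%N.
  move: D0 => /eqP; rewrite /D /w sum_nat_eq0 => /forallP /(_ i0) //.
rewrite muln_eq0 eqn0Ngt hM /= => /eqP di0.
have : (size (f i0) <= 1)%N by move: di0; rewrite /d; case: (size (f i0)) => [|[]].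
exact: psi_const.
Qed.

End Main.

Section Step3.
Variable K : numFieldType.
Variables n N : nat.
Hypothesis hnN : (n <= N)%N.

Lemma step3 (phi G : {mpoly K[N]} -> {mpoly K[N]}) (Hphi : is_alg_aut phi)
  (cGK : cancel phi G) (cKG : cancel G phi)
  (hA : forall i : 'I_n, inA n (phi 'X_(widen_ord hnN i))) :
  forall l : 'I_n, inA n (G 'X_(widen_ord hnN l)).
Proof.
move=> l0.
have Hphi' := Hphi; case: Hphi' => sc ad mu one _.
pose lF := [tuple phi 'X_k | k < N].
have phiE g : phi g = g \mPo lF := aut_comp sc ad mu one g.
pose J : 'M[{mpoly K[N]}]_N := \matrix_(j, k) mderiv j (tnth lF k).
pose H : 'M[{mpoly K[N]}]_N := \matrix_(k, l) (mderiv k (G 'X_l) \mPo lF).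
have JH : J *m H = 1%:M.
  apply/matrixP => j l; rewrite !mxE eq_sym.
  have := mderiv_comp lF j (G 'X_l); rewrite -(phiE (G 'X_l)) cKG mderivXU => ->.
  by apply: eq_bigr => k _; rewrite !mxE mulrC.
pose e : 'rV[{mpoly K[N]}]_N := \row_i ((n <= i)%N)%:R.
pose e' : 'rV[{mpoly K[N]}]_N := \row_i ((i < n)%N)%:R.
pose E := diag_mx e. pose E' := diag_mx e'.
have EE : E *m E = E.
  rewrite mulmx_diag; congr diag_mx; apply/rowP => i; rewrite !mxE.
  by case: (leqP n i) => _; rewrite ?mulr1 ?mulr0.
have E'E' : E' *m E' = E'.
  rewrite mulmx_diag; congr diag_mx; apply/rowP => i; rewrite !mxE.
  by case: (leqP n i) => _; rewrite ?mulr1 ?mulr0.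
have EE' : E *m E' = 0.
  apply/matrixP => i j; rewrite mulmx_diag !mxE.
  by case: (leqP n i) => _; rewrite ?mulr1 ?mulr0 ?mul0r ?mul1r ?mul0rn.
have E'E : E' *m E = 0.
  apply/matrixP => i j; rewrite mulmx_diag !mxE.
  by case: (leqP n i) => _; rewrite ?mulr1 ?mulr0 ?mul0r ?mul1r ?mul0rn.
have EpE' : E + E' = 1%:M.
  apply/matrixP => i j; rewrite !mxE.
  by case: (leqP n i) => _; rewrite ?mul0rn ?add0r ?addr0.
have JB : E *m J *m E' = 0.
  apply/matrixP => j k; rewrite mul_mx_diag mul_diag_mx !mxE.
  case: (ltnP k n) => hk; last by rewrite /= mulr0.
  case: (leqP n j) => hj; last by rewrite /= mul0r mul0r.
  have -> : tnth lF k = phi 'X_(widen_ord hnN (Ordinal hk)).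
    by rewrite tnth_map tnth_ord_tuple; congr (phi 'X_(_)); apply: val_inj.
  by rewrite (inA_deriv (hA (Ordinal hk)) hj) mulr0 mul0r.
have EJ : E *m J *m E = E *m J.
  by rewrite -[RHS]mulmx1 -EpE' mulmxDr JB addr0.
have J'H' : (E *m J *m E + E') *m (E *m H *m E + E') = 1%:M.
  rewrite mulmxDl !mulmxDr.
  have t1 : E *m J *m E *m (E *m H *m E) = E.
    by rewrite !mulmxA !EJ -(mulmxA E J H) JH mulmx1 EE.
  have t2 : E *m J *m E *m E' = 0 by rewrite -mulmxA EE' mulmx0.
  have t3 : E' *m (E *m H *m E) = 0 by rewrite !mulmxA E'E !mul0mx.
  by rewrite t1 t2 t3 E'E' addr0 add0r.
have H'J' := mulmx1C J'H'.
have K1 : E *m H *m E *m (E *m J) = E.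
  move: H'J'; rewrite mulmxDl !mulmxDr EJ.
  have t2 : E *m H *m E *m E' = 0 by rewrite -mulmxA EE' mulmx0.
  have t3 : E' *m (E *m J) = 0 by rewrite mulmxA E'E mul0mx.
  rewrite t2 t3 E'E' addr0 add0r -EpE' => /(congr1 (fun X => X - E')).
  by rewrite !addrK.
have K2 : E *m H *m E' = 0.
  rewrite -{1}K1 -!mulmxA [J *m (H *m E')]mulmxA JH mul1mx EE' !mulmx0.
  by [].
have Hz (k l : 'I_N) : (n <= k)%N -> (l < n)%N -> H k l = 0.
  move=> hk hl; have := congr1 (fun A : 'M[{mpoly K[N]}]_N => A k l) K2; rewrite /= mul_mx_diag mxE mul_diag_mx.
  by rewrite !mxE hk hl mulr1 mul1r.
apply: deriv_inA => k hk.
have := Hz k (widen_ord hnN l0) hk (ltn_ord l0); rewrite mxE -phiE.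
move=> e0; apply: (can_inj cGK); rewrite e0.
by rewrite (aut0 Hphi).
Qed.

End Step3.

Lemma aut_inv (K : fieldType) (N : nat) (phi G : {mpoly K[N]} -> {mpoly K[N]}) :
  is_alg_aut phi -> cancel phi G -> cancel G phi -> is_alg_aut G.
Proof.
case=> sc ad mu one _ cGK cKG; split.
- by move=> a p; rewrite -{1}(cKG p) -sc cGK.
- by move=> p q; rewrite -{1}(cKG p) -{1}(cKG q) -ad cGK.
- by move=> p q; rewrite -{1}(cKG p) -{1}(cKG q) -mu cGK.
- by rewrite -one cGK.
- by exists phi.
Qed.

Unset Implicit Arguments.
Theorem proposition1p4 (R : realType) (n N : nat) (hnN : (n <= N)%N)
    (M : 'X_{1..n}) (p q : {mpoly R[i][n]}) :
  (forall k : 'I_n, (0 < M k)%N) ->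
  p@_M = 1 ->
  (forall m : 'X_{1..n}, m \in msupp p -> forall k : 'I_n, (m k <= M k)%N) ->
  (exists phi : {mpoly R[i][N]} -> {mpoly R[i][N]},
      is_alg_aut phi /\ phi (mpoly_incl hnN p) = mpoly_incl hnN q) ->
  exists alpha : {mpoly R[i][n]} -> {mpoly R[i][n]},
    is_alg_aut alpha /\ alpha p = q.
Proof.
move=> hM hpM hsupp [phi [Hphi hpq]].
have Hphi' := Hphi; case: Hphi' => sc ad mu one [G cGK cKG].
have HG := aut_inv Hphi cGK cKG.
have hA := step2 Hphi hM hpM hsupp hpq.
have hB := step3 Hphi cGK cKG hA.
have phiA g : inA n (phi (mpoly_incl hnN g)).
  rewrite (phi_incl hnN Hphi); apply: inA_comp => i.
  by rewrite tnth_map tnth_ord_tuple.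
have GA g : inA n (G (mpoly_incl hnN g)).
  rewrite (phi_incl hnN HG); apply: inA_comp => i.
  by rewrite tnth_map tnth_ord_tuple.
pose alpha g := res n (phi (mpoly_incl hnN g)).
pose beta g := res n (G (mpoly_incl hnN g)).
exists alpha; split; last by rewrite /alpha hpq (res_incl hnN).
split.
- by move=> a g; rewrite /alpha !(inclE hnN) comp_mpolyZ sc /res comp_mpolyZ.
- by move=> g h; rewrite /alpha !(inclE hnN) comp_mpolyD ad /res comp_mpolyD.
- by move=> g h; rewrite /alpha !(inclE hnN) rmorphM mu /res rmorphM.
- by rewrite /alpha (inclE hnN) rmorph1 one /res rmorph1.
exists beta => g.
- by rewrite /alpha /beta (inA_incl_res hnN) // cGK (res_incl hnN).
- by rewrite /alpha /beta (inA_incl_res hnN) // cKG (res_incl hnN).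
Qed.
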